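(* Let $n\ge1$ and let $\epsilon_{ij}\in\{0,1\}$ be given for all $1\le i,j\le n$ with $|i-j|\le 1$. Let $w$ be the number of pairs $(u,v)\in\{0,1\}^n\times\{0,1\}^n$ such that $\epsilon_{ij}=\delta_{u_i,v_j}$ for all $1\le i,j\le n$ with $|i-j|\le1$ (where $\delta$ is the Kronecker delta). If \[ \epsilon_{i-1,i-1}+\epsilon_{i,i-1}+\epsilon_{i-1,i}+\epsilon_{i,i}\in\{0,2,4\}\quad\text{for all } i\in\{2,\dots,n\}, \] then $w=2$; otherwise $w=0$.
   Context: In the paper, such a family $(\epsilon_{ij})$ is called a ''string realizable configuration of weight $w$'', with $w$ as defined in the claim, for the alphabet $\Sigma=\{0,1\}$ (the case $k=2$, $r=1$). *)

(* Defs.v *)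
From mathcomp Require Import all_boot.
Set Implicit Arguments. Unset Strict Implicit. Unset Printing Implicit Defensive.

(* Indices 1..n are represented 0-based by 'I_n. Words in {0,1}^n are
   {ffun 'I_n -> bool} (false = 0, true = 1). A configuration eps assigns
   a bit to every pair (i,j); only pairs with |i-j| <= 1 matter. *)

Definition adj n (i j : 'I_n) : bool := (i <= j.+1) && (j <= i.+1).

Definition realizes n (eps : 'I_n -> 'I_n -> bool)
  (u v : {ffun 'I_n -> bool}) : bool :=
  [forall i, forall j, adj i j ==> (eps i j == (u i == v j))].

Definition weight n (eps : 'I_n -> 'I_n -> bool) : nat :=
  #|[set p : {ffun 'I_n -> bool} * {ffun 'I_n -> bool} | realizes eps p.1 p.2]|.

(* local parity condition at (1-based) position i in {2..n}, i.e.
   0-based k = i-1 in {1..n-1}, with previous index k-1 *)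
Definition local_ok n (eps : 'I_n -> 'I_n -> bool) : Prop :=
  forall (k : nat) (Hk : k < n) (Hk' : k.-1 < n), 0 < k ->
    let a := Ordinal Hk' in let b := Ordinal Hk in
    (nat_of_bool (eps a a) + eps b a + eps a b + eps b b) \in [:: 0; 2; 4].

(* Main.v *)
Require Import Defs.
From mathcomp Require Import all_boot.
From mathcomp Require Import zify.

Section S.
Variable m : nat.
Variable eps : 'I_m.+1 -> 'I_m.+1 -> bool.
Local Notation e i j := (eps (inord i) (inord j)).

Fixpoint U (b : bool) i := if i is i'.+1 then ((U b i' == e i' i') == e i'.+1 i') else b.
Definition V b i := (U b i == e i i).

Lemma real_nat u v : realizes eps u v <-> forall i j, i <= m -> j <= m ->
  i <= j.+1 -> j <= i.+1 -> e i j = (u (inord i) == v (inord j)).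
Proof.
split.
- move=> /forallP H i j Hi Hj h1 h2. have := H (inord i).
  move/forallP/(_ (inord j)). rewrite /adj !inordK ?ltnS // h1 h2 /=. by move/eqP.
- move=> H; apply/forallP=> i; apply/forallP=> j; apply/implyP => /andP[h1 h2].
  apply/eqP. have := H i j. rewrite !inord_val. apply; rewrite // -ltnS ltn_ord //.
Qed.

Lemma uniq_real u v : realizes eps u v -> forall i, i <= m ->
  u (inord i) = U (u (inord 0)) i /\ v (inord i) = V (u (inord 0)) i.
Proof.
move/real_nat=> H; elim=> [|i IH] Hi.
  split=> //; rewrite /V /=. have := H 0 0 Hi Hi isT isT.
  by move: (u _) (v _) (e 0 0) => x y z ->; case: x; case: y.
have [IHu IHv] := IH (ltnW Hi).
have Hu : u (inord i.+1) = U (u (inord 0)) i.+1.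
  rewrite /= -/(V _ _) -IHv. have := H i.+1 i Hi (ltnW Hi) (leqnn _) (leqW (leqnSn _)).
  by move: (u _) (v _) (e _ _) => x y z ->; case: x; case: y.
split=> //. rewrite /V -Hu. have := H i.+1 i.+1 Hi Hi (leqnSn _) (leqnSn _).
by move: (u _) (v _) (e _ _) => x y z ->; case: x; case: y.
Qed.

Lemma real_U b : local_ok eps -> realizes eps [ffun i : 'I_m.+1 => U b i] [ffun i : 'I_m.+1 => V b i].
Proof.
move=> Hl; apply/real_nat => i j Hi Hj h1 h2; rewrite !ffunE !inordK ?ltnS //.
have : j = i \/ j = i.+1 \/ i = j.+1 by lia.
case=> [E|[E|E]]; subst.
- by rewrite /V; case: (U b i); case: (e i i).
- have Hk : i.+1 < m.+1 by rewrite ltnS.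
  have Hk' : i.+1.-1 < m.+1 by rewrite ltnS.
  have := Hl i.+1 Hk Hk' isT => /=.
  have -> : Ordinal Hk = inord i.+1 by apply: val_inj; rewrite /= inordK.
  have -> : Ordinal Hk' = inord i by apply: val_inj; rewrite /= inordK.
  rewrite /V /=.
  move: (U b i) (e i i) (e i.+1 i) (e i i.+1) (e i.+1 i.+1) => a b1 c d f.
  by case: a; case: b1; case: c; case: d; case: f.
- rewrite /= -/(V b j). by case: (V b j); case: (e j.+1 j).
Qed.

Lemma real_ok u v : realizes eps u v -> local_ok eps.
Proof.
move=> /forallP H k Hk Hk' kpos /=.
set a := Ordinal Hk'; set b := Ordinal Hk.
have G : forall x y : 'I_m.+1, adj x y -> eps x y = (u x == v y).
  by move=> x y hxy; have := H x; move/forallP/(_ y); rewrite hxy => /eqP.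
rewrite !G /adj /= ?leqnn; try (apply/andP; split; lia).
by move: (u a) (u b) (v a) (v b) => p q r s; case: p; case: q; case: r; case: s.
Qed.

End S.

Theorem mainTheorem2 (n : nat) (eps : 'I_n -> 'I_n -> bool) :
  0 < n ->
  (local_ok eps -> weight eps = 2) /\ (~ local_ok eps -> weight eps = 0).
Proof.
case: n eps => [//|m] eps _; split=> Hl.
- pose P b := ([ffun i : 'I_m.+1 => U m eps b i], [ffun i : 'I_m.+1 => V m eps b i]).
  rewrite /weight; have -> : [set p : {ffun 'I_m.+1 -> bool} * {ffun 'I_m.+1 -> bool} | realizes eps p.1 p.2]
      = [set P true; P false].
    apply/setP => -[u v]; rewrite !inE /=.
    apply/idP/idP.
    + move=> hr.
      have E : (u, v) = P (u (inord 0)).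
        congr pair; apply/ffunP => i; rewrite ffunE; have [E1 E2] := @uniq_real m eps u v hr i (ltnSE (ltn_ord i)); rewrite inord_val in E1 E2; by rewrite ?E1 ?E2.
      by rewrite E; case: (u (inord 0)); rewrite eqxx ?orbT.
    + by case/orP => /eqP [-> ->]; apply: real_U.
  rewrite cards2 /P; congr S; apply/eqP; rewrite eqb1; apply/negP => /eqP [] /ffunP /(_ ord0).
  by rewrite !ffunE.
- apply/eqP; rewrite cards_eq0; apply/eqP/setP => -[u v]; rewrite !inE /=.
  by apply/negP => /real_ok.
Qed.
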